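(* Let $G$ be a group and let $H, K \leq G$ be commensurable subgroups. Then there is a geodesic in $\mathcal{C}(G)$ from $H$ to $K$ whose vertices are $H$, $H\cap K$, and $K$. Hence the distance between $H$ and $K$ in $\mathcal{C}(G)$ is $c(H,K)$, and the edge $(H,K)$ is a geodesic.
   Context: For subgroups $A,B$ of $G$, $c(A,B) = [A:A\cap B][B:A\cap B]$; $A$ and $B$ are commensurable if $c(A,B)<\infty$. The commensurability graph $\mathcal{C}(G)$ is the weighted graph whose vertices are all subgroups of $G$, with an edge between $A$ and $B$ if and only if $A\cap B$ has finite index in both $A$ and $B$, this edge having weight $c(A,B)$. The length of a path is the product of its edge weights; $\mathcal{C}(G)$ is given the path metric, the distance between two vertices being the minimal length of a path joining them, and a geodesic is a path of minimal length between its endpoints. *)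

(* Defs.v *)
From Stdlib Require Import List Arith ClassicalEpsilon.
Import ListNotations.

Record group := Group {
  carrier :> Type;
  mul : carrier -> carrier -> carrier;
  one : carrier;
  inv : carrier -> carrier;
  mulA : forall x y z, mul x (mul y z) = mul (mul x y) z;
  mul1g : forall x, mul one x = x;
  mulVg : forall x, mul (inv x) x = one
}.

Arguments mul {g} _ _.
Arguments one {g}.
Arguments inv {g} _.

Section Defs.
Variable G : group.

Definition is_subgroup (A : G -> Prop) : Prop :=
  A one /\ (forall x y, A x -> A y -> A (mul x y)) /\ (forall x, A x -> A (inv x)).

Definition inter (A B : G -> Prop) : G -> Prop := fun x => A x /\ B x.

(* [A : B] = n : the left cosets a B (a in A) are exactly n in number,
   represented by f 0, ..., f (n-1); a B = a' B iff a^-1 a' in B. *)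
Definition index_is (A B : G -> Prop) (n : nat) : Prop :=
  exists f : nat -> G,
    (forall i, i < n -> A (f i)) /\
    (forall i j, i < n -> j < n -> B (mul (inv (f i)) (f j)) -> i = j) /\
    (forall a, A a -> exists i, i < n /\ B (mul (inv (f i)) a)).

Definition finite_index (A B : G -> Prop) : Prop := exists n, index_is A B n.

(* The index as a natural number (meaningful only when finite; 0 otherwise). *)
Definition index (A B : G -> Prop) : nat :=
  match excluded_middle_informative (finite_index A B) with
  | left h => proj1_sig (constructive_indefinite_description _ h)
  | right _ => 0
  end.

Definition commensurable (A B : G -> Prop) : Prop :=
  finite_index A (inter A B) /\ finite_index B (inter A B).

Definition cc (A B : G -> Prop) : nat :=
  index A (inter A B) * index B (inter A B).

Fixpoint is_path_from (x : G -> Prop) (l : list (G -> Prop)) : Prop :=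
  match l with
  | nil => True
  | y :: l' => is_subgroup y /\ commensurable x y /\ is_path_from y l'
  end.

Definition is_path (x : G -> Prop) (l : list (G -> Prop)) : Prop :=
  is_subgroup x /\ is_path_from x l.

Fixpoint path_len (x : G -> Prop) (l : list (G -> Prop)) : nat :=
  match l with
  | nil => 1
  | y :: l' => cc x y * path_len y l'
  end.

Definition geodesic (x : G -> Prop) (l : list (G -> Prop)) : Prop :=
  is_path x l /\
  forall l', is_path x l' -> last l' x = last l x -> path_len x l <= path_len x l'.

Definition is_dist (A B : G -> Prop) (d : nat) : Prop :=
  (exists l, is_path A l /\ last l A = B /\ path_len A l = d) /\
  (forall l, is_path A l -> last l A = B -> d <= path_len A l).

End Defs.

Arguments is_subgroup {G} _.
Arguments inter {G} _ _ _.
Arguments index_is {G} _ _ _.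
Arguments finite_index {G} _ _.
Arguments index {G} _ _.
Arguments commensurable {G} _ _.
Arguments cc {G} _ _.
Arguments is_path_from {G} _ _.
Arguments is_path {G} _ _.
Arguments path_len {G} _ _.
Arguments geodesic {G} _ _.
Arguments is_dist {G} _ _ _.

(* Main.v *)
Require Import Defs.
From Stdlib Require Import List.
Import ListNotations.
From Stdlib Require Import Arith Lia Classical ClassicalEpsilon FunctionalExtensionality PropExtensionality.

Section S.
Variable G : group.
Implicit Types A B X Y Z : G -> Prop.

Lemma mulgV (x : G) : mul x (inv x) = one.
Proof.
  rewrite <- (mul1g G (mul x (inv x))).
  rewrite <- (mulVg G (inv x)) at 1.
  rewrite <- mulA, (mulA _ (inv x) x), mulVg, mul1g.
  apply mulVg.
Qed.

Lemma mulg1 (x : G) : mul x one = x.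
Proof. rewrite <- (mulVg G x), mulA, mulgV, mul1g; reflexivity. Qed.

Lemma inv_uniq (u v : G) : mul u v = one -> v = inv u.
Proof.
  intro h. rewrite <- (mul1g G v), <- (mulVg G u), <- mulA, h, mulg1. reflexivity.
Qed.

Lemma inv_mul (x y : G) : inv (mul x y) = mul (inv y) (inv x).
Proof.
  symmetry; apply inv_uniq.
  rewrite mulA, <- (mulA _ x y), mulgV, mulg1, mulgV. reflexivity.
Qed.

Lemma inv_inv (x : G) : inv (inv x) = x.
Proof. symmetry; apply inv_uniq; apply mulVg. Qed.

Lemma key (w x y : G) : mul (inv (mul w x)) (mul w y) = mul (inv x) y.
Proof.
  rewrite inv_mul, <- mulA, (mulA _ (inv w) w), mulVg, mul1g. reflexivity.
Qed.

Lemma inv_one : inv (@one G) = one.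
Proof. rewrite <- (mul1g G (inv one)). apply mulgV. Qed.

Lemma sub_inter A B : is_subgroup A -> is_subgroup B -> is_subgroup (inter A B).
Proof.
  intros (a1 & a2 & a3) (b1 & b2 & b3); unfold inter; repeat split; firstorder.
Qed.

Lemma inter_comm A B : inter A B = inter B A.
Proof.
  apply functional_extensionality; intro x; apply propositional_extensionality;
  unfold inter; tauto.
Qed.

Lemma inter_idl A B : inter A (inter A B) = inter A B.
Proof.
  apply functional_extensionality; intro x; apply propositional_extensionality;
  unfold inter; tauto.
Qed.

Lemma inter_idr A B : inter (inter A B) B = inter A B.
Proof.
  apply functional_extensionality; intro x; apply propositional_extensionality;
  unfold inter; tauto.
Qed.

Lemma inter_id A : inter A A = A.
Proof.
  apply functional_extensionality; intro x; apply propositional_extensionality;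
  unfold inter; tauto.
Qed.

Definition sep A B n := exists f : nat -> G,
  (forall i, i < n -> A (f i)) /\
  (forall i j, i < n -> j < n -> B (mul (inv (f i)) (f j)) -> i = j).

Lemma pigeon : forall n m (g : nat -> nat),
  (forall i, i < n -> g i < m) ->
  (forall i j, i < n -> j < n -> g i = g j -> i = j) -> n <= m.
Proof.
  induction n as [|n IH]; intros m g hb hi; [lia|].
  assert (hn : g n < m) by (apply hb; lia).
  set (g' := fun i => if g i <? g n then g i else g i - 1).
  assert (n <= m - 1); [|lia].
  apply (IH _ g').
  - intros i hi'. unfold g'.
    assert (g i <> g n) by (intro e; apply hi in e; lia).
    assert (g i < m) by (apply hb; lia).
    destruct (Nat.ltb_spec (g i) (g n)); lia.
  - intros i j hi' hj'. unfold g'.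
    assert (g i <> g n) by (intro e; apply hi in e; lia).
    assert (g j <> g n) by (intro e; apply hi in e; lia).
    intro e. apply hi; try lia.
    destruct (Nat.ltb_spec (g i) (g n)); destruct (Nat.ltb_spec (g j) (g n)); lia.
Qed.

Lemma idx_sep A B n : index_is A B n -> sep A B n.
Proof. intros (f & h1 & h2 & _); exists f; auto. Qed.

Lemma sep_le A B m n : is_subgroup B -> index_is A B m -> sep A B n -> n <= m.
Proof.
  intros (b1 & b2 & b3) (g & g1 & g2 & g3) (f & f1 & f2).
  set (c := fun k => epsilon (inhabits 0)
                      (fun i => i < m /\ B (mul (inv (g i)) (f k)))).
  assert (hc : forall k, k < n -> c k < m /\ B (mul (inv (g (c k))) (f k))).
  { intros k hk. unfold c. apply epsilon_spec. apply g3. auto. }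
  apply (pigeon n m c).
  - intros i hi; apply hc; auto.
  - intros i j hi hj e. apply f2; auto.
    destruct (hc i hi) as [_ hbi]; destruct (hc j hj) as [_ hbj].
    rewrite e in hbi.
    rewrite <- (key (inv (g (c j)))).
    apply b2; auto.
Qed.

Lemma index_eq A B n : is_subgroup B -> index_is A B n -> index A B = n.
Proof.
  intros hB h. unfold index.
  destruct (excluded_middle_informative (finite_index A B)) as [h'|h'].
  - destruct (constructive_indefinite_description _ h') as [n' hn']; simpl.
    apply idx_sep in h as hs. apply idx_sep in hn' as hs'.
    pose proof (sep_le _ _ _ _ hB h hs'). pose proof (sep_le _ _ _ _ hB hn' hs). lia.
  - exfalso; apply h'; exists n; auto.
Qed.

Lemma index_spec A B : is_subgroup B -> finite_index A B -> index_is A B (index A B).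
Proof.
  intros hB [n h]. rewrite (index_eq A B n hB h). auto.
Qed.

Lemma max_ex (P : nat -> Prop) N : P 0 -> (forall n, P n -> n <= N) ->
  exists n, P n /\ ~ P (S n).
Proof.
  intros h0 hb. destruct (classic (exists n, P n /\ ~ P (S n))) as [h|h]; auto.
  assert (forall n, P n).
  { induction n; auto. apply NNPP; intro c; apply h; eauto. }
  specialize (hb (S N) (H (S N))). lia.
Qed.

Lemma bounded_finite A B N : is_subgroup B -> (forall n, sep A B n -> n <= N) ->
  finite_index A B.
Proof.
  intros (b1 & b2 & b3) hb.
  destruct (max_ex (sep A B) N) as [n [[f [f1 f2]] hn]]; auto.
  { exists (fun _ => one); split; intros; lia. }
  exists n, f. repeat split; auto.
  intros a ha. apply NNPP; intro c. apply hn.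
  exists (fun i => if i =? n then a else f i). split.
  - intros i hi. destruct (Nat.eqb_spec i n); auto. apply f1; lia.
  - intros i j hi hj hB.
    destruct (Nat.eqb_spec i n); destruct (Nat.eqb_spec j n); try lia.
    + exfalso. apply c. exists j. split; [lia|].
      rewrite <- (inv_inv (mul (inv (f j)) a)), inv_mul, inv_inv. auto.
    + exfalso. apply c. exists i. split; [lia|]. auto.
    + apply f2; auto; lia.
Qed.

Lemma code_inj m2 i j i' j' : j < m2 -> j' < m2 -> i * m2 + j = i' * m2 + j' ->
  i = i' /\ j = j'.
Proof.
  intros hj hj' e.
  destruct (Nat.lt_trichotomy i i') as [h|[h|h]].
  - exfalso. assert ((i+1) * m2 <= i' * m2) by (apply Nat.mul_le_mono_r; lia). lia.
  - subst; lia.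
  - exfalso. assert ((i'+1) * m2 <= i * m2) by (apply Nat.mul_le_mono_r; lia). lia.
Qed.

Lemma tri X Y Z m1 m2 n : is_subgroup X -> is_subgroup Y -> is_subgroup Z ->
  index_is X (inter X Y) m1 -> index_is Y (inter Y Z) m2 -> sep X (inter X Z) n ->
  n <= m1 * m2.
Proof.
  intros (x1 & x2 & x3) (y1 & y2 & y3) (z1 & z2 & z3)
         (f & f1 & f2 & f3) (g & g1 & g2 & g3) (e & e1 & e2).
  set (ci := fun k => epsilon (inhabits 0)
               (fun i => i < m1 /\ inter X Y (mul (inv (f i)) (e k)))).
  assert (hci : forall k, k < n -> ci k < m1 /\ inter X Y (mul (inv (f (ci k))) (e k))).
  { intros k hk. unfold ci. apply epsilon_spec. apply f3. auto. }
  set (cj := fun k => epsilon (inhabits 0)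
               (fun j => j < m2 /\ inter Y Z (mul (inv (g j)) (mul (inv (f (ci k))) (e k))))).
  assert (hcj : forall k, k < n -> cj k < m2 /\
             inter Y Z (mul (inv (g (cj k))) (mul (inv (f (ci k))) (e k)))).
  { intros k hk. unfold cj. apply epsilon_spec. apply g3. apply hci; auto. }
  apply (pigeon n (m1 * m2) (fun k => ci k * m2 + cj k)).
  - intros k hk. destruct (hci k hk) as [h1 _]; destruct (hcj k hk) as [h2 _]. nia.
  - intros i j hi hj e0.
    destruct (hci i hi) as [hi1 _]; destruct (hcj i hi) as [hi2 [_ hzi]].
    destruct (hci j hj) as [hj1 _]; destruct (hcj j hj) as [hj2 [_ hzj]].
    destruct (code_inj _ _ _ _ _ hi2 hj2 e0) as [ei ej].
    apply e2; auto. split.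
    + apply x2; auto.
    + rewrite ei, ej in hzi. rewrite mulA in hzi, hzj.
      rewrite <- (key (mul (inv (g (cj j))) (inv (f (ci j))))). apply z2; auto.
Qed.

Lemma tri_full X Y Z : is_subgroup X -> is_subgroup Y -> is_subgroup Z ->
  finite_index X (inter X Y) -> finite_index Y (inter Y Z) ->
  finite_index X (inter X Z) /\
  index X (inter X Z) <= index X (inter X Y) * index Y (inter Y Z).
Proof.
  intros hX hY hZ h1 h2.
  pose proof (index_spec _ _ (sub_inter _ _ hX hY) h1) as s1.
  pose proof (index_spec _ _ (sub_inter _ _ hY hZ) h2) as s2.
  assert (hf : finite_index X (inter X Z)).
  { apply (bounded_finite _ _ (index X (inter X Y) * index Y (inter Y Z))).
    - apply sub_inter; auto.
    - intros n hn. exact (tri X Y Z _ _ n hX hY hZ s1 s2 hn). }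
  split; auto.
  apply (tri X Y Z _ _ _ hX hY hZ s1 s2). apply idx_sep. apply index_spec; auto. apply sub_inter; auto.
Qed.

Lemma comm_trans X Y Z : is_subgroup X -> is_subgroup Y -> is_subgroup Z ->
  commensurable X Y -> commensurable Y Z ->
  commensurable X Z /\ cc X Z <= cc X Y * cc Y Z.
Proof.
  intros hX hY hZ [a1 a2] [b1 b2].
  destruct (tri_full X Y Z hX hY hZ a1 b1) as [f1 i1].
  rewrite (inter_comm Y Z) in b2. rewrite (inter_comm X Y) in a2.
  destruct (tri_full Z Y X hZ hY hX b2 a2) as [f2 i2].
  rewrite (inter_comm Z X) in f2, i2.
  split; [split; auto|].
  unfold cc. rewrite (inter_comm Y X), (inter_comm Z Y) in i2. nia.
Qed.

Lemma fin_self A : is_subgroup A -> index_is A A 1.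
Proof.
  intros (a1 & a2 & a3). exists (fun _ => one). repeat split.
  - auto.
  - intros; lia.
  - intros a ha. exists 0. split; [lia|]. rewrite inv_one, mul1g; auto.
Qed.

Lemma comm_self A : is_subgroup A -> commensurable A A /\ cc A A = 1.
Proof.
  intro h. unfold commensurable, cc. rewrite inter_id.
  rewrite (index_eq A A 1 h (fin_self A h)).
  split; auto. split; exists 1; apply fin_self; auto.
Qed.

Lemma last_cons {T} (y x : T) l : last (y :: l) x = last l y.
Proof.
  revert x y; induction l as [|z l IH]; intros x y; [reflexivity|].
  change (last (z :: l) x = last (z :: l) y). rewrite (IH x), (IH y). reflexivity.
Qed.

Lemma path_sub (x : G -> Prop) l : is_subgroup x -> is_path_from x l -> is_subgroup (last l x).
Proof.
  revert x; induction l as [|y l IH]; intros x hx hp; [exact hx|].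
  destruct hp as (hy & _ & hp).
  assert (e : last (y :: l) x = last l y) by (apply last_cons).
  rewrite e. apply IH; auto.
Qed.

Lemma path_bound (x : G -> Prop) l : is_subgroup x -> is_path_from x l ->
  commensurable x (last l x) /\ cc x (last l x) <= path_len x l.
Proof.
  revert x; induction l as [|y l IH]; intros x hx hp.
  - simpl. destruct (comm_self x hx) as [h1 h2]. rewrite h2. auto.
  - destruct hp as (hy & hxy & hp). simpl path_len.
    assert (e : last (y :: l) x = last l y) by (apply last_cons).
    rewrite e.
    destruct (IH y hy hp) as [c1 c2].
    destruct (comm_trans x y (last l y) hx hy (path_sub y l hy hp) hxy c1) as [d1 d2].
    split; auto. eapply Nat.le_trans; [exact d2|]. apply Nat.mul_le_mono_l; auto.
Qed.

End S.

Theorem lemma6 (G : group) (H K : G -> Prop) :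
  is_subgroup H -> is_subgroup K -> commensurable H K ->
  geodesic H [inter H K; K] /\
  is_dist H K (cc H K) /\
  geodesic H [K].
Proof.
  intros hH hK hc.
  assert (hI : is_subgroup (inter H K)) by (apply sub_inter; auto).
  destruct hc as [c1 c2].
  assert (p1 : is_path H [inter H K; K]).
  { split; auto. simpl. split; [auto|split; [|split; [auto|split; [|auto]]]].
    - unfold commensurable. rewrite inter_idl. split; auto.
      exists 1; apply fin_self; auto.
    - unfold commensurable. rewrite inter_idr. split; auto.
      exists 1; apply fin_self; auto. }
  assert (len1 : path_len H [inter H K; K] = cc H K).
  { simpl. unfold cc. rewrite inter_idl, inter_idr.
    rewrite (index_eq _ _ _ 1 hI (fin_self _ _ hI)). lia. }
  assert (p2 : is_path H [K]).
  { split; auto. simpl. split; auto. split; auto. split; auto. }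
  assert (len2 : path_len H [K] = cc H K) by (simpl; lia).
  assert (lb : forall l, is_path H l -> last l H = K -> cc H K <= path_len H l).
  { intros l [_ hp] e. rewrite <- e. apply path_bound; auto. }
  split; [|split].
  - split; auto. intros l' hp e. rewrite len1. apply lb; auto.
  - split; eauto.
  - split; auto. intros l' hp e. rewrite len2. apply lb; auto.
Qed.
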